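(* Let $\mathbb{L}=(\mathcal{P},\mathcal{C},\parallel)$ be a Laguerre plane satisfying axioms (C) and (S). An automorphism $\sigma$ of $\mathbb{L}$ is a Laguerre symmetry if and only if $\sigma=\mathrm{S}_{\{K,L\}}$ for some circles $K,L$ with $|K\cap L|=2$.
   Context: A Laguerre plane is a triple $(\mathcal{P},\mathcal{C},\parallel)$ where $\mathcal{P}$ is a set of points, $\mathcal{C}\subset 2^{\mathcal{P}}$ a set of circles and $\parallel$ an equivalence relation on $\mathcal{P}$ (parallelism; its classes are called generators) such that: (1) any three pairwise non-parallel points lie on a unique circle; (2) for every circle $K$ and non-parallel points $p\in K$, $q\notin K$ there is exactly one circle $L$ with $q\in L$ and $K\cap L=\{p\}$; (3) for every point $p$ and circle $K$ there is exactly one point $q\in K$ with $q\parallel p$; (4) some circle contains at least three but not all points. Circles $K,L$ are tangent at $p$ if $K\cap L=\{p\}$ or $K=L$ (with $p\in K$); they are tangent if tangent at some point. For $p\in K$, $\langle p,K\rangle$ denotes the set of circles tangent to $K$ at $p$. Axiom (C): for any circles $K,L$ and any point $p\in K\setminus L$ there exists exactly one circle $M\in\langle p,K\rangle$ with $|M\cap L|=1$. Axiom (S): if $K,L,M,N$ are circles and $a,b,c,d$ points with $K\cap L=\{a\}$, $L\cap M=\{b\}$, $M\cap N=\{c\}$, $N\cap K=\{d\}$ and $a\nparallel c$, then there is a circle containing $a,b,c,d$. Notation: for distinct circles $K,L$ and $x\in K\setminus L$, let $M$ be the unique circle of $\langle x,K\rangle$ with $|M\cap L|=1$; then $xKL$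 is the unique point of $M\cap L$; for $x\in K\cap L$, $xKL:=x$. An automorphism is a bijection of $\mathcal{P}$ mapping the set of circles onto itself; involutory means its square is the identity. For non-tangent circles $K,L$, the double tangency symmetry $\mathrm{S}_{\{K,L\}}$ is the unique involutory automorphism $\phi$ such that $\phi(x)=xKL$ for all $x\in K$ and $\phi(M)=M$ whenever $x$ is a point with $\phi(x)\neq x$ and $M$ is a circle containing $x$ and $\phi(x)$ (such $\phi$ exists and is unique in planes satisfying (C) and (S)). A Laguerre symmetry is an involutory automorphism for which there exist two distinct generators $X,Y$ and a circle $M$ such that it fixes every point of $X\cup Y$ and maps $M$ onto itself, but does not fix $M$ pointwise. *)

(* Defs.v *)
(* Point sets are predicates P -> Prop; circles are such
   predicates, the set of circles is C : (P -> Prop) -> Prop.  Equality of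
   circles is Leibniz equality of predicates (extensional by funext/propext). *)
Set Implicit Arguments.

Section Laguerre.
Variable P : Type.
Variable C : (P -> Prop) -> Prop.
Variable par : P -> P -> Prop.

Definition inter (A B : P -> Prop) : P -> Prop := fun x => A x /\ B x.
Definition single (p : P) : P -> Prop := fun x => x = p.
Definition pair2 (a b : P) : P -> Prop := fun x => x = a \/ x = b.
Definition image (f : P -> P) (A : P -> Prop) : P -> Prop :=
  fun y => exists x, A x /\ f x = y.

Definition card1 (A : P -> Prop) : Prop := exists p, A = single p.
Definition card2 (A : P -> Prop) : Prop :=
  exists a b, a <> b /\ A = pair2 a b.

Definition tangent_at (K L : P -> Prop) (p : P) : Prop :=
  K p /\ L p /\ (inter K L = single p \/ K = L).
Definition tangent (K L : P -> Prop) : Prop := exists p, tangent_at K L p.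

Definition pencil (p : P) (K : P -> Prop) : (P -> Prop) -> Prop :=
  fun M => C M /\ tangent_at M K p.

Definition laguerre_plane : Prop :=
  (forall x, par x x) /\ (forall x y, par x y -> par y x) /\
  (forall x y z, par x y -> par y z -> par x z) /\
  (* circles are subsets of P: automatic *)
  (forall a b c, ~ par a b -> ~ par b c -> ~ par a c ->
     exists K, C K /\ K a /\ K b /\ K c /\
       forall K', C K' -> K' a -> K' b -> K' c -> K' = K) /\
  (forall K p q, C K -> K p -> ~ K q -> ~ par p q ->
     exists L, (C L /\ L q /\ inter K L = single p) /\
       forall L', C L' -> L' q -> inter K L' = single p -> L' = L) /\
  (forall p K, C K -> exists q, (K q /\ par q p) /\
       forall q', K q' -> par q' p -> q' = q) /\
  (exists K, C K /\ (exists a b c, K a /\ K b /\ K c /\ a <> b /\ b <> c /\ a <> c)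
     /\ exists x, ~ K x).

Definition axiom_C : Prop :=
  forall K L p, C K -> C L -> K p -> ~ L p ->
    exists M, (pencil p K M /\ card1 (inter M L)) /\
      forall M', pencil p K M' -> card1 (inter M' L) -> M' = M.

Definition axiom_S : Prop :=
  forall K L M N a b c d, C K -> C L -> C M -> C N ->
    inter K L = single a -> inter L M = single b ->
    inter M N = single c -> inter N K = single d -> ~ par a c ->
    exists O, C O /\ O a /\ O b /\ O c /\ O d.

(* xKL_rel K L x y : y = xKL (for x in K) *)
Definition xKL_rel (K L : P -> Prop) (x y : P) : Prop :=
  (K x /\ L x /\ y = x) \/
  (K x /\ ~ L x /\ exists M, pencil x K M /\ inter M L = single y).

Definition automorphism (f : P -> P) : Prop :=
  (forall x y, f x = f y -> x = y) /\ (forall y, exists x, f x = y) /\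
  (forall K, C K -> C (image f K)) /\
  (forall L, C L -> exists K, C K /\ image f K = L).

Definition involutory (f : P -> P) : Prop := forall x, f (f x) = x.

(* phi is the double tangency symmetry S_{K,L} (K, L distinct non-tangent
   circles); in planes with (C) and (S) it is unique. *)
Definition is_double_tangency_symmetry (K L : P -> Prop) (phi : P -> P) : Prop :=
  C K /\ C L /\ K <> L /\ ~ tangent K L /\
  automorphism phi /\ involutory phi /\
  (forall x, K x -> xKL_rel K L x (phi x)) /\
  (forall x M, phi x <> x -> C M -> M x -> M (phi x) -> image phi M = M).

Definition generator (x : P) : P -> Prop := fun y => par x y.

Definition laguerre_symmetry (s : P -> P) : Prop :=
  automorphism s /\ involutory s /\
  exists x y, generator x <> generator y /\
    (forall z, generator x z \/ generator y z -> s z = z) /\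
    exists M, C M /\ image s M = M /\ exists z, M z /\ s z <> z.

End Laguerre.

(* Main.v *)
Require Import Defs.
From Stdlib Require Import Classical FunctionalExtensionality PropExtensionality.
Set Implicit Arguments.

Lemma on_circle_par (P : Type) (C : (P -> Prop) -> Prop) (par : P -> P -> Prop)
  (HL : laguerre_plane C par) K a b : C K -> K a -> K b -> par a b -> a = b.
Proof.
  destruct HL as (Hrefl & Hsym & Htr & H1 & H2 & H3 & H4).
  intros HK Ka Kb Hab.
  destruct (H3 b K HK) as [q [[Hq1 Hq2] Hu]].
  rewrite (Hu a Ka Hab), (Hu b Kb (Hrefl b)); reflexivity.
Qed.

Lemma circle_eq (P : Type) (C : (P -> Prop) -> Prop) (par : P -> P -> Prop)
  (HL : laguerre_plane C par) K L : C K -> C L -> (forall z, K z -> L z) -> K = L.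
Proof.
  intros HK HLc Hs.
  pose proof HL as (Hrefl & Hsym & Htr & H1 & H2 & H3 & H4).
  apply functional_extensionality; intro z; apply propositional_extensionality.
  split; [apply Hs|]. intro Lz.
  destruct (H3 z K HK) as [k [[Kk pk] _]].
  assert (k = z) by (eapply (on_circle_par HL); [exact HLc|apply Hs; exact Kk|exact Lz|exact pk]).
  subst; auto.
Qed.

Lemma pick3 (P : Type) (par : P -> P -> Prop)
  (Hrefl : forall x, par x x) (Hsym : forall x y, par x y -> par y x)
  (Htr : forall x y z, par x y -> par y z -> par x z)
  a b c : ~ par a b -> ~ par b c -> ~ par a c ->
  forall v x, exists p, p <> v /\ ~ par p x.
Proof.
  intros nab nbc nac v x.
  destruct (classic (par a x)) as [ax|ax];
  destruct (classic (par b x)) as [bx|bx];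
  destruct (classic (par c x)) as [cx|cx];
  destruct (classic (a = v)) as [av|av];
  destruct (classic (b = v)) as [bv|bv];
  destruct (classic (c = v)) as [cv|cv];
  first [ exists a; tauto | exists b; tauto | exists c; tauto
        | exfalso; subst; solve [ apply nab; eauto | apply nbc; eauto | apply nac; eauto ] ].
Qed.

Lemma third (P : Type) (par : P -> P -> Prop)
  (Hrefl : forall x, par x x) (Hsym : forall x y, par x y -> par y x)
  (Htr : forall x y z, par x y -> par y z -> par x z)
  a b c : ~ par a b -> ~ par b c -> ~ par a c ->
  forall u v, ~ par u v -> exists p, ~ par p u /\ ~ par p v.
Proof.
  intros nab nbc nac u v nuv.
  destruct (classic (par a u)) as [ax|ax];
  destruct (classic (par b u)) as [bx|bx];
  destruct (classic (par c u)) as [cx|cx];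
  destruct (classic (par a v)) as [av|av];
  destruct (classic (par b v)) as [bv|bv];
  destruct (classic (par c v)) as [cv|cv];
  first [ exists a; tauto | exists b; tauto | exists c; tauto
        | exfalso; solve [ apply nab; eauto | apply nbc; eauto | apply nac; eauto
                         | apply nuv; eauto ] ].
Qed.

Lemma three_pts (P : Type) (C : (P -> Prop) -> Prop) (par : P -> P -> Prop)
  (HL : laguerre_plane C par) :
  exists K a b c, C K /\ K a /\ K b /\ K c /\ ~ par a b /\ ~ par b c /\ ~ par a c
    /\ exists x, ~ K x.
Proof.
  pose proof HL as (Hrefl & Hsym & Htr & H1 & H2 & H3 & H4).
  destruct H4 as [K [HK [[a [b [c (Ka & Kb & Kc & ab & bc & ac)]]] Hx]]].
  exists K, a, b, c; repeat split; auto;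
  intro H; [apply ab|apply bc|apply ac]; eapply on_circle_par; eauto.
Qed.

Lemma circle2 (P : Type) (C : (P -> Prop) -> Prop) (par : P -> P -> Prop)
  (HL : laguerre_plane C par) u v : ~ par u v -> exists T, C T /\ T u /\ T v.
Proof.
  intro nuv.
  pose proof HL as (Hrefl & Hsym & Htr & H1 & H2 & H3 & H4).
  destruct (three_pts HL) as [K0 [a [b [c (HK0 & _ & _ & _ & nab & nbc & nac & _)]]]].
  destruct (third par Hrefl Hsym Htr _ _ _ nab nbc nac _ _ nuv) as [p [pu pv]].
  destruct (H1 u v p) as [T (HT & Tu & Tv & _)];
    [auto | intro h; apply pv; auto | intro h; apply pu; auto |].
  exists T; auto.
Qed.

Lemma aut_par (P : Type) (C : (P -> Prop) -> Prop) (par : P -> P -> Prop)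
  (HL : laguerre_plane C par) s : automorphism C s ->
  forall a b, par a b -> par (s a) (s b).
Proof.
  intros [inj [sur [img pre]]] a b Hab.
  pose proof HL as (Hrefl & Hsym & Htr & H1 & H2 & H3 & H4).
  destruct (classic (par (s a) (s b))) as [|N]; auto. exfalso.
  destruct (classic (a = b)) as [e|ne]; [subst; apply N, Hrefl|].
  destruct (circle2 HL _ _ N) as [T (HT & Ta & Tb)].
  destruct (pre T HT) as [K [HK HKT]]. subst T.
  destruct Ta as [x [Kx ex]]. destruct Tb as [y [Ky ey]].
  apply inj in ex; apply inj in ey; subst.
  apply ne; eapply on_circle_par; eauto.
Qed.

Lemma gen2 (P : Type) (C : (P -> Prop) -> Prop) (par : P -> P -> Prop)
  (HL : laguerre_plane C par) v : exists w, par w v /\ w <> v.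
Proof.
  pose proof HL as (Hrefl & Hsym & Htr & H1 & H2 & H3 & H4).
  destruct (three_pts HL) as [K0 [a [b [c (HK0 & Ka & Kb & Kc & nab & nbc & nac & [x Hx])]]]].
  destruct (classic (K0 v)) as [Kv|Kv].
  - destruct (classic (par x v)) as [xv|xv].
    + exists x; split; auto; intro; subst; auto.
    + assert (exists p, K0 p /\ p <> v /\ ~ par p x) as [p (Kp & pv & px)].
      { destruct (classic (par a x)) as [ax|ax];
        destruct (classic (par b x)) as [bx|bx];
        destruct (classic (par c x)) as [cx|cx];
        destruct (classic (a = v)) as [av|av];
        destruct (classic (b = v)) as [bv|bv];
        destruct (classic (c = v)) as [cv|cv];
        first [ exists a; tauto | exists b; tauto | exists c; tauto
          | exfalso; subst; solve [ apply nab; eauto | apply nbc; eauto | apply nac; eauto ] ]. }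
      destruct (H2 K0 p x HK0 Kp Hx px) as [L [(HLc & Lx & HKL) _]].
      destruct (H3 v L HLc) as [w [[Lw wv] _]].
      exists w; split; auto. intro; subst w.
      assert (inter K0 L v) by (split; auto).
      rewrite HKL in H. apply pv; unfold single in H; auto.
  - destruct (H3 v K0 HK0) as [q [[Kq qv] _]].
    exists q; split; auto. intro; subst; auto.
Qed.

Lemma key (P : Type) (C : (P -> Prop) -> Prop) (par : P -> P -> Prop)
  (HL : laguerre_plane C par) s x1 : automorphism C s -> involutory s ->
  (forall z, par x1 z -> s z = z) ->
  forall T x, C T -> T x -> T (s x) -> s x <> x -> image s T = T.
Proof.
  intros Haut Hinv Hfix T x HT Tx Tsx nx.
  pose proof HL as (Hrefl & Hsym & Htr & H1 & H2 & H3 & H4).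
  destruct Haut as [inj [sur [img pre]]].
  destruct (H3 x1 T HT) as [p [[Tp px1] _]].
  assert (sp : s p = p) by (apply Hfix; auto).
  assert (n1 : ~ par x (s x)).
  { intro h; apply nx; symmetry; eapply on_circle_par; eauto. }
  assert (n2 : ~ par (s x) p).
  { intro h. apply nx. assert (s (s x) = s x) by (apply Hfix; eauto).
    rewrite Hinv in H. congruence. }
  assert (n3 : ~ par x p).
  { intro h. apply nx. apply Hfix; eauto. }
  destruct (H1 x (s x) p n1 n2 n3) as [O (_ & _ & _ & _ & U)].
  rewrite (U T HT Tx Tsx Tp) at 2.
  apply U.
  - apply img; auto.
  - exists (s x); split; [exact Tsx| apply Hinv].
  - exists x; auto.
  - exists p; auto.
Qed.

Lemma lemB (P : Type) (C : (P -> Prop) -> Prop) (par : P -> P -> Prop)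
  (HL : laguerre_plane C par) s x1 : automorphism C s -> involutory s ->
  (forall z, par x1 z -> s z = z) ->
  forall M z0, C M -> image s M = M -> M z0 -> s z0 <> z0 ->
  forall x, s x <> x -> ~ par x (s x).
Proof.
  intros Haut Hinv Hfix M z0 HM HMi Mz0 nz0 x nx Hp.
  pose proof HL as (Hrefl & Hsym & Htr & H1 & H2 & H3 & H4).
  assert (Msz0 : M (s z0)) by (rewrite <- HMi; exists z0; auto).
  assert (n1 : ~ par z0 (s z0)).
  { intro h; apply nz0; symmetry; eapply on_circle_par; eauto. }
  assert (n2 : ~ par x z0).
  { intro h. apply n1. pose proof (aut_par HL Haut _ _ h). eauto. }
  assert (n3 : ~ par x (s z0)).
  { intro h. apply n1. pose proof (aut_par HL Haut _ _ h). rewrite Hinv in H. eauto. }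
  destruct (H1 x z0 (s z0) n2 n1 n3) as [T (HT & Tx & Tz & Tsz & _)].
  pose proof (key HL _ Haut Hinv Hfix _ HT Tz Tsz nz0) as HTi.
  assert (Tsx : T (s x)) by (rewrite <- HTi; exists x; auto).
  apply nx; symmetry; eapply on_circle_par; eauto.
Qed.

Theorem theorem3p2 (P : Type) (C : (P -> Prop) -> Prop) (par : P -> P -> Prop)
  (HL : laguerre_plane C par) (HC : axiom_C C) (HS : axiom_S C par)
  (sigma : P -> P) (Hsigma : automorphism C sigma) :
  laguerre_symmetry C par sigma <->
  exists K L, C K /\ C L /\ card2 (inter K L) /\
    is_double_tangency_symmetry C K L sigma.
Proof.
  pose proof HL as (Hrefl & Hsym & Htr & H1 & H2 & H3 & H4).
  split.
  - intros [Haut [Hinv [x1 [y1 [Hgen [Hfix [M [HCM [HMinv [z0 [Mz0 Hz0]]]]]]]]]]].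
    pose proof Haut as [inj [sur [img pre]]].
    assert (Hfx : forall z, par x1 z -> sigma z = z) by (intros; apply Hfix; left; auto).
    assert (Hfy : forall z, par y1 z -> sigma z = z) by (intros; apply Hfix; right; auto).
    pose proof (lemB HL _ Haut Hinv Hfx HCM HMinv Mz0 Hz0) as HB.
    destruct (gen2 HL (sigma z0)) as [w [wp wn]].
    assert (n1 : ~ par z0 w).
    { intro h. apply (HB z0 Hz0). eauto. }
    assert (n2 : ~ par w x1).
    { intro h. apply Hz0. assert (sigma (sigma z0) = sigma z0) by (apply Hfx; eauto).
      rewrite Hinv in H. congruence. }
    assert (n3 : ~ par z0 x1).
    { intro h. apply Hz0. apply Hfx; eauto. }
    destruct (H1 z0 w x1 n1 n2 n3) as [K (HK & Kz0 & Kw & Kx1 & _)].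
    destruct (H3 y1 K HK) as [b [[Kb pb] _]].
    set (L := image sigma K).
    assert (HLc : C L) by (apply img; auto).
    assert (sx1 : sigma x1 = x1) by (apply Hfx; auto).
    assert (sb : sigma b = b) by (apply Hfy; auto).
    assert (Lx1 : L x1) by (exists x1; auto).
    assert (Lb : L b) by (exists b; auto).
    assert (HKL : K <> L).
    { intro e. assert (Ksz : K (sigma z0)) by (rewrite e; exists z0; auto).
      apply wn. eapply (on_circle_par HL); [exact HK|exact Kw|exact Ksz|exact wp]. }
    assert (nx1b : ~ par x1 b).
    { intro h. apply Hgen. apply functional_extensionality; intro t;
      apply propositional_extensionality; unfold generator; split; intro; eauto. }
    assert (Hint : inter K L = pair2 x1 b).
    { apply functional_extensionality; intro z; apply propositional_extensionality.
      split.
      - intros [Kz Lz]. unfold pair2.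
        destruct (classic (z = x1)) as [|z1]; [auto|].
        destruct (classic (z = b)) as [|zb]; [auto|].
        exfalso. apply HKL.
        assert (nbz : ~ par b z) by (intro h; apply zb; symmetry; eapply on_circle_par; eauto).
        assert (nxz : ~ par x1 z) by (intro h; apply z1; symmetry; eapply on_circle_par; eauto).
        destruct (H1 x1 b z nx1b nbz nxz) as [O (_ & _ & _ & _ & U)].
        rewrite (U K HK Kx1 Kb Kz), (U L HLc Lx1 Lb Lz); auto.
      - intros [e|e]; subst; split; auto. }
    exists K, L; split; [auto|split; [auto|split]].
    + exists x1, b; split; [intro e; subst; apply nx1b; auto | exact Hint].
    + split; [auto|split; [auto|split; [auto|split]]].
      { intros [t [Kt [Lt [Hi|He]]]]; [|auto].
        rewrite Hint in Hi.
        assert (e1 : single t x1) by (rewrite <- Hi; left; auto).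
        assert (e2 : single t b) by (rewrite <- Hi; right; auto).
        unfold single in e1, e2. apply nx1b. rewrite e1, e2; auto. }
      split; [auto|split; [auto|split]].
      * intros x Kx. unfold xKL_rel.
        destruct (classic (L x)) as [Lx|Lx].
        { left. split; [auto|split; [auto|]].
          assert (inter K L x) by (split; auto). rewrite Hint in H.
          destruct H; subst; auto. }
        right. split; [auto|split; [auto|]].
        assert (nx : sigma x <> x) by (intro e; apply Lx; exists x; auto).
        assert (npx : ~ par x (sigma x)) by (apply HB; auto).
        assert (nKsx : ~ K (sigma x)).
        { intro Ksx. assert (inter K L (sigma x)) by (split; [auto| exists x; auto]).
          rewrite Hint in H. apply nx.
          destruct H as [e|e]; rewrite <- (Hinv x), e; congruence. }
        destruct (H2 K x (sigma x) HK Kx nKsx npx) as [T [(HT & Tsx & HKT) _]].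
        assert (Tx : T x) by (assert (single x x) by reflexivity;
                                rewrite <- HKT in H; destruct H; auto).
        pose proof (key HL _ Haut Hinv Hfx _ HT Tx Tsx nx) as HTi.
        exists T. split.
        { split; [auto|split; [auto|split; [auto|left]]].
          rewrite <- HKT. apply functional_extensionality; intro y;
          apply propositional_extensionality; unfold inter; tauto. }
        apply functional_extensionality; intro y; apply propositional_extensionality.
        unfold inter, single; split.
        -- intros [Ty [y' [Ky' ey]]].
           assert (Tsy : T (sigma y)) by (rewrite <- HTi; exists y; auto).
           assert (inter K T (sigma y)).
           { split; auto. rewrite <- ey, Hinv; auto. }
           rewrite HKT in H. unfold single in H. rewrite <- H, Hinv; auto.
        -- intro e; subst; split; [auto| exists x; auto].
      * intros x N nx HN Nx Nsx. eapply (key HL _ Haut Hinv Hfx _ HN Nx Nsx nx).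
  - intros [K [L [HK [HLc [[a [b [nab Hab]]] [_ [_ [HKL [Hnt [Haut [Hinv [Hx Hcir]]]]]]]]]]]].
    pose proof Haut as [inj [sur [img pre]]].
    assert (Ka : inter K L a) by (rewrite Hab; left; auto).
    assert (Kb : inter K L b) by (rewrite Hab; right; auto).
    destruct Ka as [Ka La]; destruct Kb as [Kb Lb].
    assert (Hfix0 : forall t, K t -> L t -> sigma t = t).
    { intros t Kt Lt. destruct (Hx t Kt) as [(_ & _ & e)|(_ & nL & _)]; [auto|contradiction]. }
    assert (sa : sigma a = a) by auto.
    assert (sb : sigma b = b) by auto.
    assert (Hex : exists x, K x /\ ~ L x).
    { apply NNPP; intro N. apply HKL. apply (circle_eq HL); auto.
      intros z Kz. apply NNPP; intro nLz. apply N; exists z; auto. }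
    destruct Hex as [x [Kx nLx]].
    destruct (Hx x Kx) as [(_ & Lx & _)|(_ & _ & [T [(HT & Tx & _ & _) HTL]])]; [contradiction|].
    assert (Lsx : L (sigma x)) by (assert (single (sigma x) (sigma x)) by reflexivity;
                                     rewrite <- HTL in H; destruct H; auto).
    assert (Tsx : T (sigma x)) by (assert (single (sigma x) (sigma x)) by reflexivity;
                                     rewrite <- HTL in H; destruct H; auto).
    assert (nx : sigma x <> x) by (intro e; apply nLx; rewrite <- e; auto).
    assert (npx : ~ par x (sigma x)) by (intro h; apply nx; symmetry; eapply on_circle_par; eauto).
    assert (Hg : forall a', K a' -> L a' -> forall z, par a' z -> sigma z = z).
    { intros a' Ka' La' z pz.
      assert (sa' : sigma a' = a') by auto.
      assert (nzx : ~ par x z).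
      { intro h. assert (x = a') by (eapply (on_circle_par HL); [exact HK|exact Kx|exact Ka'|eauto]).
        subst; contradiction. }
      assert (nzsx : ~ par (sigma x) z).
      { intro h. assert (sigma x = a') by (eapply (on_circle_par HL); [exact HLc|exact Lsx|exact La'|eauto]).
        apply nLx. rewrite <- (Hinv x), H, sa'; auto. }
      destruct (H1 x (sigma x) z npx nzsx nzx) as [N (HN & Nx & Nsx & Nz & _)].
      pose proof (Hcir x N nx HN Nx Nsx) as HNi.
      assert (Nsz : N (sigma z)) by (rewrite <- HNi; exists z; auto).
      pose proof (aut_par HL Haut _ _ pz) as pz'. rewrite sa' in pz'.
      eapply (on_circle_par HL); [exact HN|exact Nsz|exact Nz|eauto]. }
    split; [auto|split; [auto|]].
    exists a, b. split.
    { intro e. assert (generator par a b) by (rewrite e; unfold generator; auto).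
      apply nab. eapply (on_circle_par HL); [exact HK|exact Ka|exact Kb|exact H]. }
    split.
    { intros z [h|h]; [apply (Hg a)|apply (Hg b)]; auto. }
    destruct (three_pts HL) as [K0 [a0 [b0 [c0 (_ & _ & _ & _ & nab0 & nbc0 & nac0 & _)]]]].
    destruct (third par Hrefl Hsym Htr _ _ _ nab0 nbc0 nac0 _ _ npx) as [c [cx csx]].
    destruct (H1 x (sigma x) c npx) as [N (HN & Nx & Nsx & _)];
      [intro h; apply csx; auto | intro h; apply cx; auto |].
    exists N; split; [auto|split; [eapply Hcir; eauto|]].
    exists x; auto.
Qed.
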